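(* Let $M$ be a finite abelian group of exponent greater than $2$. Let $f'\in\mathrm{Aut}(K)$, $f''\in\mathrm{Aut}(M)$, and $u,v\in M$ with $u^2=v^2=1$. Then $F^+_{(f',f'',u,v)}$ is an automorphism of $L_M$ and $F^-_{(f',f'',u,v)}$ is a proper half-automorphism of $L_M$.
   Context: Let $K=\{1,a,b,c\}$ be the Klein four-group. Set $L_M=K\times M$ with the operation $(A,x)*(B,y)=(AB,xy)$ if $B=1$, and $(A,x)*(B,y)=(AB,x^{-1}y)$ if $B\neq 1$. For $u,v\in M$ with $u^2=v^2=1$, $\alpha_{(u,v)}:K\to M$ is defined by $\alpha_{(u,v)}(1)=1$, $\alpha_{(u,v)}(a)=u$, $\alpha_{(u,v)}(b)=v$, $\alpha_{(u,v)}(c)=uv$. For $f'\in\mathrm{Aut}(K)$, $f''\in\mathrm{Aut}(M)$ define $F^+_{(f',f'',u,v)}(A,x)=(f'(A),f''(x)\alpha_{(u,v)}(A))$ for all $(A,x)\in L_M$, and $F^-_{(f',f'',u,v)}(1,x)=(1,f''(x))$, $F^-_{(f',f'',u,v)}(A,x)=(f'(A),f''(x^{-1})\alpha_{(u,v)}(A))$ for $A\neq 1$. A half-automorphism of a loop $L$ is a bijection $f:L\to L$ with $f(XY)\in\{f(X)f(Y),f(Y)f(X)\}$ for all $X,Y$; it is proper if it is neither an automorphism nor an anti-automorphism. *)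

(* Defs.v *)
From mathcomp Require Import all_boot all_fingroup all_solvable.
Set Implicit Arguments. Unset Strict Implicit. Unset Printing Implicit Defensive.
Local Open Scope group_scope.

Inductive Klein := K1 | Ka | Kb | Kc.

Definition kmul (A B : Klein) : Klein :=
  match A, B with
  | K1, X | X, K1 => X
  | Ka, Ka | Kb, Kb | Kc, Kc => K1
  | Ka, Kb | Kb, Ka => Kc
  | Ka, Kc | Kc, Ka => Kb
  | Kb, Kc | Kc, Kb => Ka
  end.

Definition klein_aut (f : Klein -> Klein) : Prop :=
  bijective f /\ forall A B, f (kmul A B) = kmul (f A) (f B).

Definition group_aut (M : finGroupType) (f : M -> M) : Prop :=
  bijective f /\ forall x y : M, f (x * y) = f x * f y.

Definition LMmul (M : finGroupType) (X Y : Klein * M) : Klein * M :=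
  match Y.1 with
  | K1 => (kmul X.1 Y.1, X.2 * Y.2)
  | _ => (kmul X.1 Y.1, X.2^-1 * Y.2)
  end.

Definition alpha (M : finGroupType) (u v : M) (A : Klein) : M :=
  match A with K1 => 1 | Ka => u | Kb => v | Kc => u * v end.

Definition Fplus (M : finGroupType) (f' : Klein -> Klein) (f'' : M -> M)
  (u v : M) (X : Klein * M) : Klein * M :=
  (f' X.1, f'' X.2 * alpha u v X.1).

Definition Fminus (M : finGroupType) (f' : Klein -> Klein) (f'' : M -> M)
  (u v : M) (X : Klein * M) : Klein * M :=
  match X.1 with
  | K1 => (K1, f'' X.2)
  | A => (f' A, f'' (X.2^-1) * alpha u v A)
  end.

Definition is_automorphism (T : Type) (op : T -> T -> T) (f : T -> T) : Prop :=
  bijective f /\ forall X Y, f (op X Y) = op (f X) (f Y).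

Definition is_anti_automorphism (T : Type) (op : T -> T -> T) (f : T -> T) : Prop :=
  bijective f /\ forall X Y, f (op X Y) = op (f Y) (f X).

Definition is_half_automorphism (T : Type) (op : T -> T -> T) (f : T -> T) : Prop :=
  bijective f /\ forall X Y, f (op X Y) = op (f X) (f Y) \/ f (op X Y) = op (f Y) (f X).

Definition is_proper_half_automorphism (T : Type) (op : T -> T -> T) (f : T -> T) : Prop :=
  is_half_automorphism op f /\ ~ is_automorphism op f /\ ~ is_anti_automorphism op f.

(* Main.v *)
Require Import Defs.
From mathcomp Require Import all_boot all_fingroup all_solvable.
Local Open Scope group_scope.

Lemma kdec (B : Klein) : B = K1 \/ B <> K1.
Proof. by case: B; [left|right..]. Qed.

Lemma kmul1r A : kmul K1 A = A. Proof. by case: A. Qed.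
Lemma kmulr1 A : kmul A K1 = A. Proof. by case: A. Qed.

Lemma LM1 (M : finGroupType) (X : Klein * M) y :
  LMmul X (K1, y) = (X.1, X.2 * y).
Proof. by rewrite /LMmul /= kmulr1. Qed.

Lemma LMn (M : finGroupType) (X : Klein * M) B y : B <> K1 ->
  LMmul X (B, y) = (kmul X.1 B, X.2^-1 * y).
Proof. by rewrite /LMmul /=; case: B. Qed.

Lemma kaut1 f : klein_aut f -> f K1 = K1.
Proof.
case=> _ h; have := h K1 K1; rewrite /=.
by case: (f K1).
Qed.

Arguments kaut1 {f}.
Lemma kautn f A : klein_aut f -> A <> K1 -> f A <> K1.
Proof.
move=> hf hA e; apply: hA; case: (hf) => [[g gK _] _].
by move: (gK A) (gK K1); rewrite e (kaut1 hf) => <- ->.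
Qed.

Arguments kautn {f A}.
Section Ab.
Variable M : finGroupType.
Hypothesis comm : forall x y : M, x * y = y * x.
Variables u v : M.
Hypothesis hu : u * u = 1.
Hypothesis hv : v * v = 1.

Lemma alphaV A : (alpha u v A)^-1 = alpha u v A.
Proof.
apply: (mulgI (alpha u v A)); rewrite mulgV.
case: A => //=; first by rewrite mulg1.
rewrite mulgA -(mulgA u v u) (comm v u) !mulgA hu mul1g hv //.
Qed.

Lemma alphaM A B : alpha u v (kmul A B) = alpha u v A * alpha u v B.
Proof.
case: A; case: B => /=; rewrite ?mulg1 ?mul1g ?hu ?hv //;
 rewrite ?mulgA ?hu ?mul1g //.
- by rewrite (comm v u) -mulgA hv mulg1.
- by rewrite (comm u v) -mulgA hu mulg1.
- by rewrite -mulgA hv mulg1.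
- by rewrite -(mulgA u v u) (comm v u) !mulgA hu mul1g hv.
Qed.
End Ab.
Arguments alphaM {M} comm {u v} hu hv.
Arguments alphaV {M} comm {u v} hu hv.

Lemma gaut1 (M : finGroupType) (f : M -> M) : group_aut f -> f 1 = 1.
Proof.
case=> _ h; apply: (mulgI (f 1)); by rewrite -h !mulg1.
Qed.

Arguments gaut1 {M f}.
Lemma gautV (M : finGroupType) (f : M -> M) x : group_aut f -> f x^-1 = (f x)^-1.
Proof.
move=> hf; apply: (mulgI (f x)); rewrite mulgV -hf.2 mulgV; exact: gaut1.
Qed.

Arguments gautV {M f}.
Lemma FM1 (M : finGroupType) f' f'' (u v : M) x :
  Fminus f' f'' u v (K1, x) = (K1, f'' x).
Proof. by []. Qed.
Lemma FMn (M : finGroupType) f' f'' (u v : M) A x : A <> K1 ->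
  Fminus f' f'' u v (A, x) = (f' A, f'' x^-1 * alpha u v A).
Proof. by rewrite /Fminus /=; case: A. Qed.
Lemma kmulC A B : kmul A B = kmul B A. Proof. by case: A; case: B. Qed.

Theorem proposition4p10 (M : finGroupType)
  (Mab : abelian [set: M]) (Mexp : (2 < exponent [set: M])%N)
  (f' : Klein -> Klein) (hf' : klein_aut f')
  (f'' : M -> M) (hf'' : group_aut f'')
  (u v : M) (hu : u ^+ 2 = 1) (hv : v ^+ 2 = 1) :
  is_automorphism (@LMmul M) (Fplus f' f'' u v) /\
  is_proper_half_automorphism (@LMmul M) (Fminus f' f'' u v).
Proof.
have comm : forall x y : M, x * y = y * x.
  by move=> x y; apply: (centsP Mab) x (in_setT x) y (in_setT y).
rewrite expgS expg1 in hu; rewrite expgS expg1 in hv.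
have aM := alphaM comm hu hv; have aV := alphaV comm hu hv.
have f1 := kaut1 hf'; have fn := kautn hf'.
have g1 := gaut1 hf''; have gV := gautV ^~ hf''; have gM := hf''.2.
have [x0 hx0] : exists x : M, x * x <> 1.
  case: (pickP (fun x : M => x * x != 1)) => [x /eqP hx|H]; first by exists x.
  have : exponent [set: M] %| 2.
    apply/exponentP => x _; rewrite expgS expg1; apply/eqP; move: (H x) => /= /negbFE //.
  by move/dvdn_leq => /(_ isT); rewrite leqNgt Mexp.
case: (hf') => [[g' g'K K'g] _]; case: (hf'') => [[g'' g''K K''g] _].
have gn : forall A, A <> K1 -> g' A <> K1.
  by move=> A hA e; apply: hA; rewrite -(K'g A) e f1.
split.
  split.
    exists (fun Y => (g' Y.1, g'' (Y.2 * (alpha u v (g' Y.1))^-1))).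
      by case=> A x; rewrite /Fplus /= g'K -mulgA mulgV mulg1 g''K.
    by case=> A x; rewrite /Fplus /= K'g K''g -mulgA mulVg mulg1.
  case=> A x [B y]; case: (kdec B) => [->|hB].
    by rewrite LM1 /Fplus /= f1 LM1 /= gM -!mulgA (comm (alpha u v A)) /= mulg1.
  rewrite LMn // /Fplus /= LMn; last exact: fn.
  rewrite -hf'.2 aM gM gV invMg aV.
  by congr pair; rewrite !mulgA; congr (_ * _); rewrite -(mulgA (alpha u v A)) [RHS]comm.
have hinj : forall x y, f'' x = f'' y -> x = y.
  by move=> x y e; rewrite -(g''K x) e g''K.
have hx0' : f'' x0 <> (f'' x0)^-1.
  move=> e; apply: hx0; apply: hinj; rewrite gM g1 {1}e mulVg //.
split; [split|split].
- pose h := fun Y : Klein * M => match Y.1 with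
    | K1 => (K1, g'' Y.2)
    | _ => (g' Y.1, (g'' (Y.2 * (alpha u v (g' Y.1))^-1))^-1) end.
  have hn : forall B y, B <> K1 -> h (B, y) = (g' B, (g'' (y * (alpha u v (g' B))^-1))^-1).
    by rewrite /h /=; case.
  exists h.
    case=> A x; case: (kdec A) => [->|hA].
      by rewrite FM1 /h /= g''K.
    by rewrite FMn // hn ?g'K -?mulgA ?mulgV ?mulg1 ?g''K ?invgK //; exact: fn.
  case=> B y; case: (kdec B) => [->|hB].
    by rewrite /h /= FM1 K''g.
  by rewrite hn // FMn ?K'g ?invgK ?K''g -?mulgA ?mulVg ?mulg1 //; exact: gn.
- case=> A x [B y]; case: (kdec A) => [->|hA]; case: (kdec B) => [->|hB].
  + by left; rewrite !FM1 !LM1 /= gM.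
  + right; rewrite LMn // /= FMn //.
    rewrite FMn // FM1 LM1 /=.
    by rewrite invMg invgK gM gV -!mulgA (comm (f'' x)).
  + right; rewrite LM1 /= FM1 !(FMn _ _ _ _ _ _ _ hA) LMn /=; last exact: fn.
    by rewrite invMg gM !gV mulgA.
  + case: (kdec (kmul A B)) => [e|e].
      right; rewrite LMn // /= e FM1 (FMn _ _ _ _ _ _ _ hA) (FMn _ _ _ _ _ _ _ hB) LMn; last exact: fn.
      have eAB : alpha u v B = alpha u v A.
        apply: (mulgI (alpha u v A)); rewrite -aM e /= -{1}(aV A) mulVg //.
      rewrite /= -hf'.2 kmulC e f1; congr pair.
      rewrite eAB invMg aV gM !gV invgK.
      by rewrite [RHS]comm -!mulgA (mulgA (alpha u v A)) -{1}(aV A) mulVg mul1g.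
    left; rewrite LMn // /= (FMn _ _ _ _ _ _ _ e) (FMn _ _ _ _ _ _ _ hA) (FMn _ _ _ _ _ _ _ hB) LMn /=; last exact: fn.
    rewrite -hf'.2 aM; congr pair.
    rewrite !invMg !invgK !aV gM !gV !invgK !mulgA; congr (_ * _).
    by rewrite [RHS]comm (comm (alpha u v A)) mulgA.
- case=> _ h.
  have := h (K1, x0) (Ka, 1); rewrite LMn // /= !(FMn _ _ _ _ _ Ka) // FM1 LMn /=; last exact: fn.
  case=> e; apply: hx0'; apply: (mulIg (alpha u v Ka)).
  by rewrite mulg1 invgK invg1 g1 mul1g in e.
- case=> _ h.
  have := h (Ka, x0) (Kb, 1); rewrite LMn // /= (FMn _ _ _ _ _ Kc) // (FMn _ _ _ _ _ Kb) //.
  rewrite (FMn _ _ _ _ _ Ka) // LMn /=; last exact: fn.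
  case=> _ e; apply: hx0'; apply: (mulIg (u * v)).
  rewrite mulg1 invgK invg1 g1 mul1g (aV Kb : v^-1 = v) gV in e.
  by rewrite e (comm v) -mulgA.
Qed.
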